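(* Fix $\beta\in[0,1)$. For each $n$, let $l=l_n$ be an integer with $\liminf_{n\to\infty} l_n/n>\beta$, let $G_0$ be an $n\times l$ binary matrix whose entries are i.i.d. uniform on $\{0,1\}$, and let $G_1$ be any $n\times k$ binary matrix and $\mathbf m\in\{0,1\}^k$ any message. Consider the defect model and linear-equation encoding described in the context. Then the probability of encoding failure $P(E=0)$ (over the random choice of $G_0$ and the random defect pattern) tends to $0$ as $n\to\infty$. In particular, rates $k/n=1-l/n$ arbitrarily close to $C_{\mathrm{BDC}}=1-\beta$ are achievable on the binary defect channel using encoding by solving the linear equation $G_0^{\mathcal U}\mathbf d=\mathbf b^{\mathcal U}$.
   Context: All arithmetic is over $\mathrm{GF}(2)$. Defect model: each of the $n$ memory cells is independently defective with probability $\beta$; a defective cell is stuck at $0$ or at $1$, each with probability $1/2$, independently. Let $\mathcal U\subseteq\{1,\dots,n\}$ be the set of defect positions, $U=|\mathcal U|$, and $\mathbf s^{\mathcal U}\in\{0,1\}^{U}$ the vector of stuck-at values. For a matrix $M$ (resp. vector $\mathbf v$) with rows indexed by $\{1,\dots,n\}$, $M^{\mathcal U}$ (resp. $\mathbf v^{\mathcal U}$) denotes the submatrix (resp. subvector) of rows indexed by $\mathcal U$. Encoding: set $\mathbf b=G_1\mathbf m+\mathbf s$ on $\mathcal U$, i.e. $\mathbf b^{\mathcal U}=(G_1\mathbf m)^{\mathcal U}+\mathbf s^{\mathcal U}$, and look for $\mathbf d\in\{0,1\}^l$ with $G_0^{\mathcal U}\mathbf d=\mathbf b^{\mathcal U}$;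 then the codeword $\mathbf c=G_1\mathbf m+G_0\mathbf d$ agrees with the stuck-at value at every defect position. $E=1$ (encoding success) if such $\mathbf d$ exists, and $E=0$ (encoding failure) otherwise. *)

(* Defs.v *)
From HB Require Import structures.
From mathcomp Require Import all_boot all_order all_algebra.
Set Implicit Arguments. Unset Strict Implicit. Unset Printing Implicit Defensive.
Import Order.TTheory GRing.Theory Num.Theory.
Local Open Scope ring_scope.

(* Defect pattern of n cells: D i = None (cell i not defective),
   D i = Some s (cell i defective, stuck at value s). *)
Definition defect_pattern (n : nat) := {ffun 'I_n -> option bool}.

Definition cell_prob (R : fieldType) (beta : R) (o : option bool) : R :=
  if o is Some _ then beta / 2 else 1 - beta.

Definition defect_prob (R : fieldType) (beta : R) n (D : defect_pattern n) : R :=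
  \prod_(i < n) cell_prob beta (D i).

(* E = 1: there is d in {0,1}^l with G0^U d = b^U, where
   b^U = (G1 m)^U + s^U (over GF(2)). *)
Definition encodable n l k (G0 : 'M['F_2]_(n, l)) (G1 : 'M['F_2]_(n, k))
  (m : 'cV['F_2]_k) (D : defect_pattern n) : bool :=
  [exists d : 'cV['F_2]_l,
    [forall i : 'I_n,
      if D i is Some s then (G0 *m d) i 0 == (G1 *m m) i 0 + (s%:R : 'F_2)
      else true]].

Definition P_fail (R : fieldType) (beta : R) n l k (G1 : 'M['F_2]_(n, k))
  (m : 'cV['F_2]_k) : R :=
  \sum_(G0 : 'M['F_2]_(n, l)) \sum_(D : defect_pattern n)
     ((2 ^+ (n * l))^-1 * defect_prob beta D *
        (~~ encodable G0 G1 m D)%:R).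

(* Main.v *)
Require Import Defs.
From HB Require Import structures.
From mathcomp Require Import all_boot all_order all_algebra.
From mathcomp Require Import ring lra.
Import Order.TTheory GRing.Theory Num.Theory.
Local Open Scope ring_scope.
Lemma bern (R : realFieldType) (y : R) (k : nat) : -1 <= y -> 1 + k%:R * y <= (1 + y) ^+ k.
Proof.
move=> hy; elim: k => [|k IH]; first by rewrite mul0r addr0 expr0.
rewrite exprS -natr1.
have h0 : 0 <= 1 + y by lra.
have := ler_wpM2l h0 IH.
have : 0 <= k%:R * y * y by rewrite -mulrA mulr_ge0 // ?ler0n // -expr2 sqr_ge0.
nra.
Qed.

Lemma analytic (R : archiRealFieldType) (beta delta : R) : 0 <= beta -> beta < 1 -> 0 < delta ->
 exists t : R, [/\ 1 <= t, t <= 2 & forall eps, 0 < eps -> exists N, forall n l : nat,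
   (N <= n)%N -> (beta+delta)*n%:R <= l%:R -> (1 - beta + beta * t)^+n / t^+l < eps].
Proof.
move=> hb0 hb1 hd.
set q := (Num.truncn (2/delta)).+1.
have hq : 2 < q%:R * delta.
  have := truncnS_gt (2/delta); rewrite -/q ltr_pdivrMr //.
have q0 : (0 < q)%N by [].
set p := Num.truncn ((beta+delta)*q%:R).
have hp1 : p%:R <= (beta+delta)*q%:R.
  by rewrite truncn_le; apply: mulr_ge0; [lra| rewrite ler0n].
have hp2 : (beta+delta)*q%:R < p%:R + 1 by rewrite natr1; apply: truncnS_gt.
have hpb : 1 < p%:R - beta * q%:R by lra.
have hpq0 : 0 < p%:R * q%:R + 1 :> R by apply: ltr_wpDl; [rewrite mulr_ge0 ?ler0n|].
set x := (p%:R * q%:R + 1 : R)^-1.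
have hx0 : 0 < x by rewrite invr_gt0.
have hxe : x * (p%:R * q%:R + 1) = 1 by rewrite mulVf // gt_eqF.
have hpqx : p%:R * q%:R * x < 1.
  have : 0 < x by []. nra.
have hx1 : x <= 1.
  have : 0 <= p%:R * q%:R :> R by rewrite mulr_ge0 ?ler0n. nra.
set t := 1 + x; set A := 1 + beta * x.
have hy0 : 0 <= beta * x by rewrite mulr_ge0 // ltW.
have hy1 : beta * x <= 1.
  have : 0 <= (1 - beta) * x by rewrite mulr_ge0 // ?ltW //; lra.
  lra.
have hA1 : 1 <= A by rewrite /A; lra.
have hAq : A ^+ q * (1 - q%:R * (beta * x)) <= 1.
  have h1 : 1 - q%:R * (beta * x) <= (1 - beta * x) ^+ q.
    by have := @bern _ (- (beta * x)) q ltac:(lra); rewrite mulrN.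
  apply: (le_trans (y := A ^+ q * (1 - beta * x) ^+ q)).
    by apply: ler_wpM2l => //; apply: exprn_ge0; lra.
  rewrite -exprMn /A; apply: exprn_ile1; nra.
have htp : 1 + p%:R * x <= t ^+ p by rewrite /t; apply: bern; lra.
have hqb : 0 < 1 - q%:R * (beta * x).
  have : 0 <= q%:R * (beta * x) by rewrite mulr_ge0 ?ler0n.
  have : q%:R * (beta * x) <= p%:R * q%:R * x.
    rewrite mulrCA mulrA ler_wpM2r // ?(ltW hx0) //. 
    have : 0 <= q%:R :> R by rewrite ler0n. nra.
  nra.
have hkey : A ^+ q < t ^+ p.
  apply: (lt_le_trans _ htp).
  rewrite -(ltr_pM2r hqb); apply: (le_lt_trans hAq).
  have hbp : beta * (p%:R * q%:R * x) <= p%:R * q%:R * x.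
    have : 0 <= p%:R * q%:R * x by rewrite !mulr_ge0 ?ler0n ?ltW.
    nra.
  have hh : 0 < x * (p%:R - beta * q%:R - beta * (p%:R * q%:R * x)).
    by apply: mulr_gt0 => //; lra.
  lra.
set C := A ^+ q.
have hC0 : 0 < C by rewrite exprn_gt0 // (lt_le_trans ltr01).
have ht1 : 1 <= t by rewrite /t; lra.
set s := t ^+ p / C.
have hs : 1 < s by rewrite /s ltr_pdivlMr // mul1r.
exists t; split => //; first by rewrite /t; lra.
move=> eps he.
set h := s - 1.
have hh0 : 0 < h by rewrite /h subr_gt0.
set a0 := (Num.truncn (C / (eps * h))).+1.
have ha0 : C < a0%:R * (eps * h).
  by rewrite -ltr_pdivrMr ?mulr_gt0 //; apply: truncnS_gt.
exists (q * a0)%N => n l hn hl.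
set a := (n %/ q)%N.
have haa : (a0 <= a)%N by rewrite /a leq_divRL // mulnC.
have hn1 : (n <= q * a.+1)%N by rewrite mulnC ltnW // ltn_ceil.
have hqa : (q * a <= n)%N by rewrite mulnC leq_divM.
have hpa : (p * a <= l)%N.
  rewrite -(ler_nat R) natrM; apply: le_trans hl.
  apply: (le_trans (y := (beta + delta) * (q * a)%:R)).
    by rewrite natrM mulrA ler_wpM2r ?ler0n.
  by rewrite ler_wpM2l ?ler_nat //; lra.
have eA : 1 - beta + beta * t = A by rewrite /A /t; ring.
rewrite eA ltr_pdivrMr ?exprn_gt0 ?(lt_le_trans ltr01) //.
have hCa : 0 < C ^+ a by rewrite exprn_gt0.
have e1 : A ^+ (q * a.+1) = C * C ^+ a by rewrite exprM -/C exprS.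
have e2 : t ^+ (p * a) = s ^+ a * C ^+ a by rewrite exprM -exprMn /s divfK // gt_eqF.
have hsa : 1 + a%:R * h <= s ^+ a.
  have -> : s = 1 + h by rewrite /h; ring.
  by apply: bern; lra.
have hah : a0%:R * (eps * h) <= eps * (a%:R * h).
  rewrite mulrCA; apply: ler_wpM2l; [exact: ltW|]; apply: ler_wpM2r; [exact: ltW|]; by rewrite ler_nat.
have hC : C < eps * s ^+ a.
  apply: (lt_le_trans ha0); apply: (le_trans hah).
  rewrite ler_wpM2l ?ltW //; lra.
apply: (le_lt_trans (y := C * C ^+ a)).
  by rewrite -e1; apply: ler_weXn2l.
apply: (lt_le_trans (y := eps * t ^+ (p * a))).
  by rewrite e2 mulrA ltr_pM2r.
by apply: ler_wpM2l; [exact: ltW| exact: ler_weXn2l].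
Qed.

Lemma F2_nz (x : 'F_2) : x != 0 -> x = 1.
Proof. case: x => [[|[|?]]] //= ? _; exact/val_inj. Qed.

Lemma not_enc_witness n l k (G0 : 'M['F_2]_(n, l)) (G1 : 'M['F_2]_(n, k)) m D :
  ~~ encodable G0 G1 m D ->
  exists y : 'cV['F_2]_n, [/\ y != 0, forall i, D i = None -> y i 0 = 0 & G0^T *m y = 0].
Proof.
move=> hne.
pose P : 'M['F_2]_n := diag_mx (\row_i ((D i != None)%:R)).
pose c : 'cV['F_2]_n := \col_i ((G1 *m m) i 0 + (if D i is Some s then (s%:R : 'F_2) else 0)).
have hPt : P^T = P by rewrite tr_diag_mx.
have hPe : forall (v : 'cV['F_2]_n) i, (P *m v) i 0 = (D i != None)%:R * v i 0.
  by move=> v i; rewrite mul_diag_mx mxE mxE.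
case: (boolP (P <= (P *m G0)^T)%MS) => hsub.
  move/submxP: hsub => [X hX].
  case/negP: hne; apply/existsP; exists (X^T *m c); apply/forallP => i.
  case eDi: (D i) => [s|] //.
  have : P *m (G0 *m (X^T *m c)) = P *m c.
    have hP' : P *m G0 *m X^T = P.
      by rewrite -[RHS]hPt {2}hX trmx_mul trmxK.
    by rewrite !mulmxA hP'.
  move/matrixP => /(_ i 0); rewrite !hPe eDi /= !mul1r => ->.
  by rewrite /c mxE eDi.
move: hsub; rewrite submxE => hnz.
set C := cokermx (P *m G0)^T in hnz.
have [i [j hij]] : exists i j, (P *m C) i j != 0.
  case: (pickP (fun ij : 'I_n * 'I_n => (P *m C) ij.1 ij.2 != 0)) => [[i j] /= h|h].
    by exists i, j.
  case/negP: hnz; apply/eqP/matrixP => i j; rewrite [RHS]mxE.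
  by move: (h (i, j)) => /= /negbFE /eqP.
exists (P *m col j C); split.
- apply/negP => /eqP /matrixP /(_ i 0); have e : (col j (P *m C)) i 0 = (P *m C) i j by rewrite mxE.
  rewrite colE mulmxA -colE e [RHS]mxE => /eqP.
  by rewrite (negbTE hij).
- by move=> i' hi'; rewrite hPe hi' mul0r.
- rewrite mulmxA -[G0^T](trmxK) -hPt -trmx_mul colE mulmxA.
  by rewrite trmxK /C mulmx_coker mul0mx.
Qed.

  
Lemma card_cV l : #|{: 'cV['F_2]_l}| = (2 ^ l)%N.
Proof. by rewrite card_mx card_Fp // muln1. Qed.

Lemma count_G (R : comNzRingType) n l (y : 'cV['F_2]_n) : y != 0 ->
  (\sum_(G : 'M['F_2]_(n,l)) ((G^T *m y == 0)%:R : R)) * (2 ^ l)%:R = (2 ^ (n * l))%:R.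
Proof.
move=> hy.
have [i0 hi0] : exists i0, y i0 0 != 0.
  case: (pickP (fun i => y i 0 != 0)) => [i /= h|h]; first by exists i.
  case/negP: hy; apply/eqP/matrixP => i j; rewrite [RHS]mxE ord1.
  by move: (h i) => /= /negbFE /eqP.
have hy1 := F2_nz _ hi0.
have step : forall w : 'cV['F_2]_l,
    \sum_(G : 'M['F_2]_(n,l)) ((G^T *m y == w)%:R : R) = \sum_(G : 'M['F_2]_(n,l)) ((G^T *m y == 0)%:R : R).
  move=> w; rewrite (reindex_inj (addIr (delta_mx i0 0 *m w^T))) /=.
  apply: eq_bigr => G _.
  have hr : delta_mx 0 i0 *m y = 1.
    by rewrite -rowE; apply/matrixP => a b; rewrite !ord1 !mxE hy1.
  rewrite linearD /= mulmxDl trmx_mul trmxK trmx_delta -mulmxA hr mulmx1.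
  by rewrite -subr_eq0 addrK.
have hone : forall a : 'cV['F_2]_l, \sum_(w : 'cV['F_2]_l) ((a == w)%:R : R) = 1.
  move=> a; rewrite (bigD1 a) //= eqxx big1 ?addr0 // => w hw.
  by rewrite eq_sym (negbTE hw).
transitivity (\sum_(w : 'cV['F_2]_l) \sum_(G : 'M['F_2]_(n,l)) ((G^T *m y == 0)%:R : R)).
  by rewrite sumr_const card_cV -[in RHS]mulr_natr.
transitivity (\sum_(w : 'cV['F_2]_l) \sum_(G : 'M['F_2]_(n,l)) ((G^T *m y == w)%:R : R)).
  by apply: eq_bigr => w _; rewrite step.
rewrite exchange_big /= (eq_bigr (fun _ => 1)) => [|G _]; last exact: hone.
by rewrite sumr_const card_mx card_Fp.
Qed.

Definition ndef {n} (D : defect_pattern n) := #|[pred i | D i != None]|.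

Lemma count_supp (R : comNzRingType) n (D : defect_pattern n) :
  \sum_(f : {ffun 'I_n -> 'F_2}) \prod_i (((D i != None) || (f i == 0))%:R : R)
  = (2 ^ ndef D)%:R.
Proof.
rewrite -(bigA_distr_bigA (fun i (v : 'F_2) => (((D i != None) || (v == 0))%:R : R))) /=.
rewrite (eq_bigr (fun i => if D i != None then 2%:R else 1)) => [|i _].
  by rewrite -big_mkcond prodr_const natrX.
case: (D i != None) => /=.
  by rewrite sumr_const card_Fp.
rewrite (bigD1 0) //= big1 ?addr0 // => v hv.
by rewrite (negbTE hv).
Qed.

Lemma perD (R : realFieldType) n l k (G1 : 'M['F_2]_(n, k)) m (D : defect_pattern n) (t : R) :
  1 <= t -> t <= 2 ->
  (2 ^+ (n * l))^-1 * \sum_(G0 : 'M['F_2]_(n, l)) ((~~ encodable G0 G1 m D)%:R : R)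
  <= t ^+ ndef D / t ^+ l.
Proof.
move=> ht1 ht2.
set u := ndef D.
set S := \sum_(G0 : 'M['F_2]_(n, l)) ((~~ encodable G0 G1 m D)%:R : R).
have h2nl : 0 < (2 ^+ (n * l) : R) by rewrite exprn_gt0.
have h2l : 0 < (2 ^+ l : R) by rewrite exprn_gt0.
have ht0 : 0 < t by apply: lt_le_trans ht1.
pose a (f : {ffun 'I_n -> 'F_2}) := \prod_i (((D i != None) || (f i == 0))%:R : R).
have ha0 : forall f, 0 <= a f by move=> f; apply: prodr_ge0 => i _; apply: ler0n.
have hS1 : S <= 2 ^+ (n * l).
  apply: (le_trans (y := \sum_(G0 : 'M['F_2]_(n, l)) (1 : R))).
    by apply: ler_sum => G _; rewrite lern1 leq_b1.
  by rewrite sumr_const card_mx card_Fp // natrX.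
have hS2 : S <= 2 ^+ u * 2 ^+ (n * l) / 2 ^+ l.
  apply: (le_trans (y := \sum_(G0 : 'M['F_2]_(n, l)) \sum_(f : {ffun 'I_n -> 'F_2})
       a f * (([exists i, f i != 0] )%:R * ((G0^T *m \col_i f i == 0)%:R)))).
    apply: ler_sum => G _.
    case: (boolP (encodable G G1 m D)) => henc /=.
      by apply: sumr_ge0 => f _; rewrite mulr_ge0 // mulr_ge0 ?ler0n.
    have [y [hy0 hy1 hy2]] := @not_enc_witness _ _ _ _ _ _ _ henc.
    pose f := [ffun i => y i 0].
    have hcf : \col_i f i = y by apply/matrixP => i j; rewrite ord1 !mxE ffunE.
    rewrite (bigD1 f) //= hcf hy2 eqxx.
    have -> : a f = 1.
      by rewrite /a big1 // => i _; case eD: (D i) => //=; rewrite ffunE hy1 // eqxx.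
    have -> : [exists i, f i != 0].
      apply/existsP.
      case: (pickP (fun i => y i 0 != 0)) => [i /= h|h]; first by exists i; rewrite ffunE.
      case/negP: hy0; apply/eqP/matrixP => i j; rewrite [RHS]mxE ord1.
      by move: (h i) => /= /negbFE /eqP.
    by rewrite !mul1r lerDl; apply: sumr_ge0 => f' _; rewrite mulr_ge0 // mulr_ge0 ?ler0n.
  rewrite exchange_big /=.
  apply: (le_trans (y := \sum_(f : {ffun 'I_n -> 'F_2}) a f * (2 ^+ (n * l) / 2 ^+ l))).
    apply: ler_sum => f _; rewrite -mulr_sumr; apply: ler_wpM2l => //.
    rewrite -mulr_sumr.
    case: (boolP [exists i, f i != 0]) => hex /=; last by rewrite mul0r divr_ge0 // ltW.
    rewrite mul1r ler_pdivlMr // -!natrX.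
    rewrite count_G //.
    apply/negP => /eqP /matrixP; case/existsP: hex => i hi /(_ i 0); rewrite mxE [RHS]mxE => e.
    by rewrite e eqxx in hi.
  by rewrite -big_distrl /= count_supp natrX mulrA.
case: (leqP l u) => hlu.
  apply: (le_trans (y := 1)).
    by rewrite mulrC ler_pdivrMr // mul1r.
  rewrite ler_pdivlMr ?exprn_gt0 // mul1r; exact: ler_weXn2l.
apply: (le_trans (y := 2 ^+ u / 2 ^+ l)).
  by rewrite mulrC ler_pdivrMr //; apply: (le_trans hS2); rewrite mulrAC.
have [d ->] : exists d, l = (u + d)%N by exists (l - u)%N; rewrite subnKC // ltnW.
have h2u : (2 ^+ u : R) != 0 by rewrite gt_eqF ?exprn_gt0.
have htu : t ^+ u != 0 by rewrite gt_eqF ?exprn_gt0.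
rewrite !exprD !invfM !mulrA mulfV // mulfV // !mul1r.
rewrite lef_pV2 ?posrE ?exprn_gt0 //.
by apply: lerXn2r => //; rewrite nnegrE // (le_trans ler01 ht1).
Qed.

Lemma sum_opt (R : comNzRingType) (F : option bool -> R) :
  \sum_(o : option bool) F o = F None + (F (Some true) + F (Some false)).
Proof.
rewrite (bigD1 None) //= (bigD1 (Some true)) //= (bigD1 (Some false)) //=.
by rewrite big_pred0 ?addr0 // => -[[]|].
Qed.

Lemma Pfail_bound (R : realFieldType) (beta : R) n l k (G1 : 'M['F_2]_(n, k)) m (t : R) :
  0 <= beta -> beta <= 1 -> 1 <= t -> t <= 2 ->
  P_fail beta l G1 m <= (1 - beta + beta * t) ^+ n / t ^+ l.
Proof.
move=> hb0 hb1 ht1 ht2.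
rewrite /P_fail exchange_big /=.
have hcell : forall o, 0 <= cell_prob beta o.
  by case=> [s|] /=; [rewrite divr_ge0 | rewrite subr_ge0].
apply: (le_trans (y := \sum_(D : defect_pattern n) defect_prob beta D * t ^+ ndef D / t ^+ l)).
  apply: ler_sum => D _.
  rewrite -mulr_sumr mulrAC -mulrA. 
  rewrite (mulrC (\sum_ _ _)) mulrCA -mulrA.
  apply: ler_wpM2l; first by apply: prodr_ge0 => i _.
  exact: perD.
rewrite -big_distrl /= ler_pdivlMr ?exprn_gt0 ?(lt_le_trans ltr01) //.
rewrite divfK ?gt_eqF ?exprn_gt0 ?(lt_le_trans ltr01) //.
have e : forall D : defect_pattern n, defect_prob beta D * t ^+ ndef D =
   \prod_i (cell_prob beta (D i) * (if D i != None then t else 1)).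
  move=> D; rewrite big_split /= -big_mkcond prodr_const //.
rewrite (eq_bigr _ (fun D _ => e D)) /=.
rewrite -(bigA_distr_bigA (fun (i : 'I_n) (o : option bool) => cell_prob beta o * (if o != None then t else 1))) /=.
rewrite prodr_const card_ord sum_opt /=.
have -> : (1 - beta) * 1 + (beta / 2 * t + beta / 2 * t) = 1 - beta + beta * t.
  by rewrite mulr1 -mulrDl -splitr.
by [].
Qed.

Theorem proposition3 (R : archiRealFieldType) (beta : R) :
  0 <= beta -> beta < 1 ->
  forall (l : nat -> nat),
  (* liminf_{n -> oo} l n / n > beta *)
  (exists2 delta : R, 0 < delta &
     exists N0 : nat, forall n : nat, (N0 <= n)%N ->
       (beta + delta) * n%:R <= (l n)%:R) ->
  forall (k : nat -> nat) (G1 : forall n : nat, 'M['F_2]_(n, k n))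
         (m : forall n : nat, 'cV['F_2]_(k n)),
  forall eps : R, 0 < eps ->
    exists N : nat, forall n : nat, (N <= n)%N ->
      P_fail beta (l n) (G1 n) (m n) < eps.
Proof.
move=> hb0 hb1 l [delta hd [N0 hN0]] k G1 m eps he.
have [t [ht1 ht2 ht]] := analytic _ _ _ hb0 hb1 hd.
have [N hN] := ht eps he.
exists (maxn N0 N) => n hn.
apply: (le_lt_trans (@Pfail_bound _ beta n (l n) (k n) (G1 n) (m n) t hb0 (ltW hb1) ht1 ht2)).
apply: hN; first exact: leq_trans (leq_maxr _ _) hn.
apply: hN0; exact: leq_trans (leq_maxl _ _) hn.
Qed.
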